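(* Let $m\ge2$ and $z_0,\dots,z_{m-1}\in\mathbb C\setminus\{0\}$ with $z_i/z_j\notin\mathbb R$ for $i\ne j$. Then $$\Omega=\Big\{z\in\mathbb C:\sum_{j=0}^{m-1}|z\wedge z_j|\le1\Big\}$$ is a convex, centrally symmetric $2m$-gon with vertices at $\pm\tau_jz_j$, $j=0,\dots,m-1$, where $$\tau_j=\Big(\sum_{i=0,\,i\ne j}^{m-1}|z_j\wedge z_i|\Big)^{-1}.$$
   Context: For $z,w\in\mathbb C$, $|z\wedge w|$ denotes the area of the parallelogram spanned by $z$ and $w$, i.e. $|\operatorname{Im}(\bar z w)|$. *)

(* Defs.v *)
From HB Require Import structures.
From mathcomp Require Import all_boot all_order all_algebra.
From mathcomp Require Import complex.
From mathcomp Require Import reals.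
Set Implicit Arguments. Unset Strict Implicit. Unset Printing Implicit Defensive.
Import Order.TTheory GRing.Theory Num.Theory.
Local Open Scope ring_scope.
Local Open Scope complex_scope.

(* |z /\ w| = |Im(conj z * w)|, the area of the parallelogram spanned by z, w *)
Definition wedge (R : rcfType) (z w : R[i]) : R := `| complex.Im (z^* * w) |.

Definition in_conv (R : rcfType) (I : finType) (A : {pred I}) (V : I -> R[i])
    (w : R[i]) : Prop :=
  exists lam : I -> R,
    [/\ forall k, 0 <= lam k,
        forall k, k \notin A -> lam k = 0,
        \sum_k lam k = 1
      & w = \sum_k (lam k)%:C * V k].

(* Main.v *)
Require Import Defs.
From HB Require Import structures.
From mathcomp Require Import all_boot all_order all_algebra.
From mathcomp Require Import complex.
From mathcomp Require Import reals.
From mathcomp Require Import ring lra.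
Set Implicit Arguments. Unset Strict Implicit. Unset Printing Implicit Defensive.
Import Order.TTheory GRing.Theory Num.Theory.
Local Open Scope ring_scope.
Local Open Scope complex_scope.

Definition DD (R : realType) (x y : R[i]) : R := complex.Im (x^* * y).

Lemma DDE (R : realType) (x y : R[i]) :
  DD x y = complex.Re x * complex.Im y - complex.Im x * complex.Re y.
Proof. case: x => a b; case: y => c d; rewrite /DD /=. ring. Qed.

Lemma DDD (R : realType) (x y v : R[i]) : DD (x + y) v = DD x v + DD y v.
Proof. rewrite !DDE; case: x => a b; case: y => c d /=. ring. Qed.

Lemma DDZ (R : realType) (r : R) (x v : R[i]) : DD (r%:C * x) v = r * DD x v.
Proof. rewrite !DDE; case: x => a b /=. ring. Qed.

Lemma DDN (R : realType) (x v : R[i]) : DD (- x) v = - DD x v.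
Proof. rewrite !DDE; case: x => a b /=. ring. Qed.

Lemma DD0 (R : realType) (v : R[i]) : DD 0 v = 0.
Proof. rewrite !DDE /=. ring. Qed.

Lemma DDxx (R : realType) (x : R[i]) : DD x x = 0.
Proof. rewrite !DDE. ring. Qed.

Lemma DDC (R : realType) (x y : R[i]) : DD y x = - DD x y.
Proof. rewrite !DDE. ring. Qed.

Lemma DDsum (R : realType) (T : finType) (F : T -> R[i]) (v : R[i]) :
  DD (\sum_k F k) v = \sum_k DD (F k) v.
Proof.
apply: (big_morph (fun x => DD x v)); first by move=> x y; rewrite DDD.
exact: DD0.
Qed.

Lemma wedgeE (R : realType) (x y : R[i]) : wedge x y = `|DD x y|.
Proof. by []. Qed.

Lemma DDnz (R : realType) (x y : R[i]) : y != 0 -> x / y \notin Num.real ->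
  DD y x != 0.
Proof.
move=> hy; apply: contra => /eqP h.
have -> : x / y = (x * y^*) / (y * y^*).
  by rewrite -mulf_div divff ?mulr1 // conjc_eq0.
have -> : x * y^* = (complex.Re x * complex.Re y + complex.Im x * complex.Im y)%:C.
  case: x y hy h => c d [a b] hy; rewrite !DDE /= => h.
  apply/eqP; rewrite eq_complex /=; apply/andP; split; apply/eqP; [ring | lra].
have -> : y * y^* = ((complex.Re y)^+2 + (complex.Im y)^+2)%:C.
  case: y {hy h} => a b /=; apply/eqP; rewrite eq_complex /=; apply/andP; split; apply/eqP; ring.
rewrite -fmorph_div realE !lecE /= eqxx /=.
set q := (X in 0 <= X); case: (lerP 0 q) => h1 //; by rewrite ltW.
Qed.

Lemma absD_lt (R : realType) (x y : R) : `|x + y| < `|x| + `|y| -> x * y < 0.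
Proof.
case: (lerP 0 x) => hx; case: (lerP 0 y) => hy;
  rewrite ?(ger0_norm hx) ?(ltr0_norm hx) ?(ger0_norm hy) ?(ltr0_norm hy) ltr_norml;
  move=> /andP [h1 h2]; nra.
Qed.

Lemma absD_gt (R : realType) (x y : R) : x * y < 0 -> `|x + y| < `|x| + `|y|.
Proof.
case: (lerP 0 x) => hx; case: (lerP 0 y) => hy;
  rewrite ?(ger0_norm hx) ?(ltr0_norm hx) ?(ger0_norm hy) ?(ltr0_norm hy) ltr_norml;
  move=> h; apply/andP; split; nra.
Qed.

Lemma sum_ind (R : realType) (T : finType) (x : T) (a : R) :
  \sum_p a * (p == x)%:R = a.
Proof.
rewrite (bigD1 x) //= eqxx mulr1 big1 ?addr0 // => p /negbTE ->; by rewrite mulr0.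
Qed.

Lemma sumV_ind (R : realType) (T : finType) (x : T) (a : R) (V : T -> R[i]) :
  \sum_p (a * (p == x)%:R)%:C * V p = a%:C * V x.
Proof.
rewrite (bigD1 x) //= eqxx mulr1 big1 ?addr0 // => p /negbTE ->; by rewrite mulr0 mul0r.
Qed.

Lemma conv4 (R : realType) (T : finType) (V : T -> R[i]) (x y u u' : T)
    (al be h : R) (w : R[i]) :
  0 <= al -> 0 <= be -> 0 <= h -> al + be + h + h = 1 -> V u + V u' = 0 ->
  w = al%:C * V x + be%:C * V y -> in_conv predT V w.
Proof.
move=> ha hb hh hs hu ->.
exists (fun p => al * (p == x)%:R + be * (p == y)%:R + h * (p == u)%:R + h * (p == u')%:R).
split.
- move=> p; rewrite !addr_ge0 // mulr_ge0 //.
- by move=> k; rewrite inE.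
- by rewrite !big_split /= !sum_ind.
- under eq_bigr => p _ do rewrite !rmorphD !mulrDl.
  rewrite !big_split /= !sumV_ind -addrA -mulrDr hu mulr0 addr0 //.
Qed.

Lemma DDZr (R : realType) (r : R) (x v : R[i]) : DD x (r%:C * v) = r * DD x v.
Proof. rewrite !DDE; case: v => a b /=. ring. Qed.

Lemma decomp (R : realType) (x y w : R[i]) : DD x y != 0 ->
  w = (DD w y / DD x y)%:C * x + (DD w x / DD y x)%:C * y.
Proof.
move=> h; rewrite (DDC x y); move: h; rewrite !DDE.
case: x => a b; case: y => c d; case: w => e f /= h.
apply/eqP; rewrite eq_complex /=; apply/andP; split; apply/eqP; field; exact: h.
Qed.

Lemma sum_lt1 (R : realType) (T : finType) (i : T) (F G : T -> R) :
  (forall k, F k <= G k) -> F i < G i -> \sum_k F k < \sum_k G k.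
Proof.
move=> hle hlt; rewrite (bigD1 i) //= [X in _ < X](bigD1 i) //=.
by apply: ltr_leD => //; apply: ler_sum => k _.
Qed.

Lemma f_conv (R : realType) (m : nat) (z : 'I_m -> R[i]) (T : finType)
   (lam : T -> R) (W : T -> R[i]) : (forall k, 0 <= lam k) ->
  \sum_j `|DD (\sum_k (lam k)%:C * W k) (z j)|
     <= \sum_k lam k * \sum_j `|DD (W k) (z j)|.
Proof.
move=> hl.
under eq_bigr => j _ do rewrite DDsum.
under [X in _ <= X]eq_bigr => k _ do rewrite mulr_sumr.
rewrite exchange_big /=; apply: ler_sum => j _.
apply: le_trans (ler_norm_sum _ _ _) _; apply: ler_sum => k _.
by rewrite DDZ normrM ger0_norm.
Qed.

Lemma comb1 (R : realType) (X Y : R[i]) (al be ga de q : R) : q * de = be ->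
  al%:C * X + be%:C * Y = (al - ga * q)%:C * X + q%:C * (ga%:C * X + de%:C * Y).
Proof.
move=> <-; case: X => a b; case: Y => c d.
apply/eqP; rewrite eq_complex /=; apply/andP; split; apply/eqP; ring.
Qed.

Lemma comb2 (R : realType) (X Y : R[i]) (al be ga de q : R) : q * ga = al ->
  al%:C * X + be%:C * Y = q%:C * (ga%:C * X + de%:C * Y) + (be - de * q)%:C * Y.
Proof.
move=> <-; case: X => a b; case: Y => c d.
apply/eqP; rewrite eq_complex /=; apply/andP; split; apply/eqP; ring.
Qed.

Theorem lemma4p10 (R : realType) (m : nat) (z : 'I_m -> R[i]) :
  (2 <= m)%N ->
  (forall j, z j != 0) ->
  (forall i j, i != j -> z i / z j \notin Num.real) ->
  let tau (j : 'I_m) : R := (\sum_(i < m | i != j) wedge (z j) (z i))^-1 in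
  let V (p : bool * 'I_m) : R[i] :=
    (if p.1 then -1 else 1) * ((tau p.2)%:C * z p.2) in
  [/\ forall w : R[i], (\sum_(j < m) wedge w (z j) <= 1) <-> in_conv predT V w,
      injective V
    & forall p, ~ in_conv (predC1 p) V (V p)].
Proof.
move=> hm hz hr tau V.
have Dz : forall i j, i != j -> DD (z j) (z i) != 0.
  by move=> i j hij; apply: DDnz (hz j) (hr i j hij).
have other : forall j : 'I_m, exists i, i != j.
  move=> j; have h0 : (0 < m)%N by apply: leq_trans hm.
  have h1 : (1 < m)%N by [].
  case: (eqVneq j (Ordinal h0)) => hj.
    by exists (Ordinal h1); rewrite hj.
  by exists (Ordinal h0); rewrite eq_sym.
have tau_gt0 : forall j, 0 < tau j.
  move=> j; rewrite /tau invr_gt0; have [i hij] := other j.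
  rewrite (bigD1 i) //=.
  have h1 : 0 < wedge (z j) (z i) by rewrite wedgeE normr_gt0 Dz // eq_sym.
  have h2 : 0 <= \sum_(i0 < m | (i0 != j) && (i0 != i)) wedge (z j) (z i0).
    by apply: sumr_ge0 => k _; rewrite wedgeE.
  lra.
pose sgn (p : bool * 'I_m) : R := if p.1 then -1 else 1.
have VE : forall p, V p = (sgn p * tau p.2)%:C * z p.2.
  by case=> [[] j]; rewrite /V /sgn /= rmorphM ?rmorphN1 ?rmorph1 mulrA.
have DV : forall p v, DD (V p) v = sgn p * tau p.2 * DD (z p.2) v.
  by move=> p v; rewrite VE DDZ.
have aDV : forall p v, `|DD (V p) v| = tau p.2 * `|DD (z p.2) v|.
  move=> p v; rewrite DV !normrM (ger0_norm (ltW (tau_gt0 _))).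
  by rewrite /sgn; case: p.1; rewrite ?normrN normr1 mul1r.
pose f w := \sum_(j < m) `|DD w (z j)|.
have fV : forall p, f (V p) = 1.
  move=> [s j]; rewrite /f.
  under eq_bigr => i _ do rewrite aDV.
  rewrite -mulr_sumr (bigD1 j) //= DDxx normr0 add0r /tau.
  have := tau_gt0 j; rewrite /tau invr_gt0 => h.
  by rewrite mulVf // gt_eqF.
have Vneg : forall j, V (false, j) + V (true, j) = 0.
  by move=> j; rewrite /V /= mul1r mulN1r addrN.
have Vopp : forall s t j, t != s -> V (t, j) = - V (s, j).
  move=> s t j; case: s; case: t => //= _; apply/eqP; rewrite -subr_eq0 opprK.
    by rewrite Vneg.
  by rewrite addrC Vneg.
have sgtau : forall p, sgn p * tau p.2 != 0.
  move=> p; rewrite mulf_eq0 negb_or (gt_eqF (tau_gt0 _)) /= andbT /sgn.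
  by case: p.1; rewrite ?oppr_eq0 oner_eq0.
have fV' : forall p, \sum_j `|DD (V p) (z j)| = 1 := fV.
split.
- move=> w; split; last first.
    case=> lam [hl _ hs ->].
    change (f (\sum_k (lam k)%:C * V k) <= 1); rewrite /f.
    apply: le_trans (f_conv z V hl) _.
    under eq_bigr => k _ do rewrite fV' mulr1.
    by rewrite hs.
  move=> hw0; have hw : f w <= 1 := hw0.
  have asgn : forall p, `|sgn p| = 1.
    by move=> p; rewrite /sgn; case: p.1; rewrite ?normrN normr1.
  pose coef j k := DD w (z k) / DD (z j) (z k).
  pose g (pr : 'I_m * 'I_m) := `|coef pr.1 pr.2| / tau pr.1 + `|coef pr.2 pr.1| / tau pr.2.
  have gV : forall j k s t (al be : R), j != k -> 0 <= al -> 0 <= be ->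
      w = al%:C * V (s, j) + be%:C * V (t, k) -> g (j, k) = al + be.
    move=> j k s t al be hjk ha hb e.
    rewrite /g /coef /= e !DDD !DDZ !DV /= !DDxx !mulr0 addr0 add0r.
    have d1 : DD (z j) (z k) != 0 by rewrite Dz // eq_sym.
    have d2 : DD (z k) (z j) != 0 by rewrite Dz.
    rewrite !mulrA !mulfK //.
    rewrite !normrM !asgn !mulr1 !(ger0_norm (ltW (tau_gt0 _))) !ger0_norm //.
    by rewrite !mulfK // gt_eqF ?tau_gt0.
  have j0 : 'I_m by exists 0%N; apply: leq_trans hm.
  have [k0 hk0] := other j0.
  have hP0 : (k0, j0).1 != (k0, j0).2 by [].
  case: (@arg_minP _ _ _ (k0, j0) (fun pr : 'I_m * 'I_m => pr.1 != pr.2) g hP0).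
  move=> [j k] /= hjk hmin.
  pose a := coef j k; pose b := coef k j.
  pose s := a < 0; pose t := b < 0.
  pose al := `|a| / tau j; pose be := `|b| / tau k.
  have hal : 0 <= al by rewrite /al divr_ge0 // ltW ?tau_gt0.
  have hbe : 0 <= be by rewrite /be divr_ge0 // ltW ?tau_gt0.
  have sgE : forall x : R, `|x| * (if x < 0 then -1 else 1) = x.
    move=> x; case: ltrP => h.
      by rewrite ltr0_norm // mulrN1 opprK.
    by rewrite ger0_norm // mulr1.
  have wAB : w = al%:C * V (s, j) + be%:C * V (t, k).
    have e1 : al * (sgn (s, j) * tau j) = a.
      by rewrite /al [sgn _ * _]mulrC mulrA divfK ?gt_eqF ?tau_gt0 // /sgn /s /= sgE.
    have e2 : be * (sgn (t, k) * tau k) = b.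
      by rewrite /be [sgn _ * _]mulrC mulrA divfK ?gt_eqF ?tau_gt0 // /sgn /t /= sgE.
    rewrite (VE (s, j)) (VE (t, k)) /= !mulrA -!rmorphM e1 e2 /a /b /coef.
    by apply: decomp; rewrite Dz // eq_sym.
  suff hf : al + be <= f w.
    apply: (conv4 (h := (1 - al - be) / 2) hal hbe _ _ (Vneg j) wAB); lra.
  rewrite leNgt; apply/negP => hlt.
  pose A := V (s, j); pose B := V (t, k).
  have fA : \sum_i `|DD A (z i)| = 1 := fV' _.
  have fB : \sum_i `|DD B (z i)| = 1 := fV' _.
  have sumAB : forall c d : R, 0 <= c -> 0 <= d ->
      c + d = \sum_i (c * `|DD A (z i)| + d * `|DD B (z i)|).
    by move=> c d hc hd; rewrite big_split /= -!mulr_sumr fA fB !mulr1.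
  have fw : f w = \sum_i `|al * DD A (z i) + be * DD B (z i)|.
    by rewrite /f wAB; apply: eq_bigr => i _; rewrite DDD !DDZ.
  have [i hi] : exists i, `|al * DD A (z i) + be * DD B (z i)|
                          < al * `|DD A (z i)| + be * `|DD B (z i)|.
    case: (pickP (fun i => `|al * DD A (z i) + be * DD B (z i)|
                          < al * `|DD A (z i)| + be * `|DD B (z i)|)) => [i hi | hn].
      by exists i.
    have : al + be <= f w.
      rewrite fw (sumAB _ _ hal hbe); apply: ler_sum => i _.
      by rewrite leNgt hn.
    lra.
  have hprod : (al * DD A (z i)) * (be * DD B (z i)) < 0.
    apply: absD_lt. rewrite [`|al * _|]normrM [`|be * _|]normrM (ger0_norm hal) (ger0_norm hbe) //.
  have hal' : 0 < al.
    rewrite lt_neqAle hal andbT; apply/eqP => e.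
    by move: hprod; rewrite -e !mul0r ltxx.
  have hbe' : 0 < be.
    rewrite lt_neqAle hbe andbT; apply/eqP => e.
    by move: hprod; rewrite -e !mul0r mulr0 ltxx.
  have hAB : DD A (z i) * DD B (z i) < 0.
    by move: hprod; rewrite mulrACA pmulr_rlt0 // mulr_gt0.
  have hij : i != j.
    by apply/eqP => e; move: hAB; rewrite e /A DV DDxx mulr0 mul0r ltxx.
  have hik : i != k.
    by apply/eqP => e; move: hAB; rewrite e /B DV DDxx mulr0 mulr0 ltxx.
  have hABnz : DD A B != 0.
    rewrite /A DV DDC /B DV mulrN oppr_eq0 mulf_neq0 ?(sgtau (s, j)) //.
    by rewrite mulf_neq0 ?(sgtau (t, k)) // Dz // eq_sym.
  pose C0 := V (false, i).
  pose g0 := DD C0 B / DD A B; pose d0 := DD C0 A / DD B A.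
  have eC0 : C0 = g0%:C * A + d0%:C * B := decomp C0 hABnz.
  have hgd0 : 0 < g0 * d0.
    have E : g0 * d0 * (DD A B * DD A B)
             = - (tau i * tau i) * (DD A (z i) * DD B (z i)).
      rewrite /g0 /d0 (DDC B C0) (DDC A C0) (DDC A B) /C0 (VE (false, i)) !DDZr /sgn /=.
      by field.
    have he2 : 0 < DD A B * DD A B.
      by rewrite -expr2 lt_def sqrf_eq0 hABnz sqr_ge0.
    have hpos : 0 < - (tau i * tau i) * (DD A (z i) * DD B (z i)).
      by rewrite mulNr -mulrN mulr_gt0 ?mulr_gt0 ?tau_gt0 // oppr_gt0.
    by rewrite -(pmulr_lgt0 _ he2) E.
  have [r [ga [de [hga [hde eC]]]]] : exists r ga de, 0 < ga /\ 0 < de /\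
      V (r, i) = ga%:C * A + de%:C * B.
    case: (ltrP 0 g0) => hg.
      exists false, g0, d0; split => //; split => //.
      by move: hgd0; rewrite pmulr_rgt0.
    have hg' : g0 < 0.
      rewrite lt_neqAle hg andbT; apply/eqP => e; move: hgd0.
      by rewrite e mul0r ltxx.
    exists true, (- g0), (- d0); split; first by rewrite oppr_gt0.
    split.
      rewrite oppr_gt0; move: hgd0; rewrite -(opprK g0) mulNr oppr_gt0.
      by rewrite pmulr_rlt0 // oppr_gt0.
    rewrite (Vopp false true i) // -/C0 eC0 !rmorphN !mulNr opprD //.
  have hgd : 1 < ga + de.
    rewrite -(fV' (r, i)) eC (sumAB _ _ (ltW hga) (ltW hde)).
    apply: (sum_lt1 (i:=i)).
      move=> l; rewrite DDD !DDZ; apply: le_trans (ler_normD _ _) _.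
      by rewrite [`|ga * _|]normrM [`|de * _|]normrM (ger0_norm (ltW hga)) (ger0_norm (ltW hde)).
    rewrite DDD !DDZ; have := absD_gt (x := ga * DD A (z i)) (y := de * DD B (z i)).
    rewrite [`|ga * _|]normrM [`|de * _|]normrM (ger0_norm (ltW hga)) (ger0_norm (ltW hde)); apply.
    by rewrite mulrACA pmulr_rlt0 // mulr_gt0.
  have gjk : g (j, k) = al + be by apply: (gV j k s t).
  case: (lerP (be * ga) (al * de)) => hc.
    pose q := be / de.
    have hq : q * de = be by rewrite /q divfK // gt_eqF.
    have hq0 : 0 < q by rewrite /q divr_gt0.
    have e1 : w = (al - ga * q)%:C * A + q%:C * V (r, i).
      by rewrite eC wAB; apply: comb1.
    have hnn : 0 <= al - ga * q.
      rewrite -hq in hc; nra.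
    have hji : j != i by rewrite eq_sym.
    have := hmin (j, i) hji.
    rewrite gjk (gV j i s r (al - ga * q) q hji hnn (ltW hq0) e1).
    rewrite -hq => hle; nra.
  pose q := al / ga.
  have hq : q * ga = al by rewrite /q divfK // gt_eqF.
  have hq0 : 0 < q by rewrite /q divr_gt0.
  have e1 : w = q%:C * V (r, i) + (be - de * q)%:C * B.
    by rewrite eC wAB; apply: comb2.
  have hnn : 0 <= be - de * q.
    rewrite -hq in hc; nra.
  have := hmin (i, k) hik.
  rewrite gjk (gV i k r t q (be - de * q) hik (ltW hq0) hnn e1).
  rewrite -hq => hle; nra.
- move=> [s j] [t k] /= e.
  have hkj : k = j.
    apply/eqP; apply: contraT => hkj.
    have := congr1 (fun x => DD x (z j)) e; rewrite /= !DV /= DDxx mulr0 => /esym/eqP.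
    by rewrite mulf_eq0 (negbTE (sgtau (t, k))) (negbTE (Dz j k _)) // eq_sym.
  subst k; congr pair.
  have hne : forall i, i != j -> tau j * DD (z j) (z i) != 0.
    by move=> i hij; rewrite mulf_eq0 negb_or (gt_eqF (tau_gt0 _)) /= Dz.
  have [i hij] := other j.
  have := congr1 (fun x => DD x (z i)) e; rewrite !DV /sgn /=.
  case: s t {e} => [] [] //= h; exfalso; move: (hne i hij);
    have h2 : tau j * DD (z j) (z i) = 0 by lra.
    by rewrite h2 eqxx.
  by rewrite h2 eqxx.
- move=> [s j] [lam [hl h0 hs hA]].
  pose A := V (s, j).
  pose L v := \sum_(i < m | i != j) Num.sg (DD A (z i)) * DD v (z i).
  have LS : L (\sum_q (lam q)%:C * V q) = \sum_q lam q * L (V q).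
    rewrite /L; under eq_bigr => i _ do rewrite DDsum mulr_sumr.
    rewrite exchange_big /=; apply: eq_bigr => q _; rewrite mulr_sumr.
    by apply: eq_bigr => i _; rewrite DDZ mulrCA.
  have LN : forall v, L (- v) = - L v.
    by move=> v; rewrite /L -sumrN; apply: eq_bigr => i _; rewrite DDN mulrN.
  have Ajj : DD A (z j) = 0 by rewrite /A DV DDxx mulr0.
  have fV2 : forall q, \sum_(i < m | i != j) `|DD (V q) (z i)| = 1 - `|DD (V q) (z j)|.
    by move=> q; rewrite -(fV' q) [X in _ = X - _](bigD1 j) //= addrC addrK.
  have LA : L A = 1.
    rewrite /L; under eq_bigr => i _ do rewrite -normrEsg.
    by rewrite fV2 Ajj normr0 subr0.
  have Lle : forall v, L v <= \sum_(i < m | i != j) `|DD v (z i)|.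
    move=> v; apply: ler_sum => i _; apply: le_trans (ler_norm _) _.
    rewrite normrM normr_sg; case: (_ != 0); rewrite ?mul1r ?mul0r //.
  have Llt : forall q, q != (s, j) -> L (V q) < 1.
    move=> [t k] hq; case: (eqVneq k j) => hk.
      subst k; rewrite (Vopp s t j); last by apply: contraNneq hq => ->.
      by rewrite LN LA; lra.
    apply: le_lt_trans (Lle _) _; rewrite fV2 aDV /=.
    have : 0 < tau k * `|DD (z k) (z j)|.
      by rewrite mulr_gt0 ?tau_gt0 // normr_gt0 Dz // eq_sym.
    lra.
  have hsum : \sum_q lam q * (1 - L (V q)) = 0.
    under eq_bigr => q _ do rewrite mulrBr mulr1.
    by rewrite sumrB hs -LS -hA LA subrr.
  case: (pickP (fun q => 0 < lam q)) => [q hq | hn].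
    have hqp : q != (s, j).
      by apply/eqP => e; move: hq; rewrite h0 ?ltxx // e inE /= eqxx.
    have : 0 < \sum_q lam q * (1 - L (V q)).
      have H1 : 0 < lam q * (1 - L (V q)).
        by apply: mulr_gt0 => //; rewrite subr_gt0 Llt.
      have H2 : 0 <= \sum_(k | k != q) lam k * (1 - L (V k)).
        apply: sumr_ge0 => k _; case: (eqVneq k (s, j)) => hk.
          by rewrite h0 ?mul0r // hk inE /= eqxx.
        by apply: mulr_ge0 => //; rewrite subr_ge0 ltW // Llt.
      rewrite (bigD1 q) //=; lra.
    by rewrite hsum ltxx.
  have : \sum_q lam q = 0.
    by apply: big1 => q _; apply/eqP; rewrite eq_le hl andbT leNgt hn.
  by rewrite hs; apply/eqP; rewrite oner_eq0.
Qed.
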